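(* For every integer $L\ge3$, the class of MPNNs cannot count $L$-paths at graph level and cannot count $L$-cycles at graph level. That is, for each $L\ge3$ there exist graphs $G_1,G_2$ with $C(L\text{-path},G_1)\ne C(L\text{-path},G_2)$ and $C(L\text{-cycle},G_1)\ne C(L\text{-cycle},G_2)$ such that every MPNN gives $h_{G_1}=h_{G_2}$.
   Context: Graphs are finite, simple, undirected, $G=(V,E)$, possibly carrying node attributes $x_v$ and edge attributes $e_{u,v}$ (a fixed constant when absent). $N(v)$ is the neighbour set of $v$. For $L\ge1$, an $L$-path is a sequence of edges $(v_1,v_2),\dots,(v_L,v_{L+1})$ with $v_1,\dots,v_{L+1}$ pairwise distinct; for $L\ge3$, an $L$-cycle is such a sequence with $v_1,\dots,v_L$ pairwise distinct and $v_{L+1}=v_1$. Two paths (resp. cycles) are identified when their edge sets coincide; $C(L\text{-path},G)$, $C(L\text{-cycle},G)$ are the numbers of inequivalent $L$-paths, $L$-cycles of $G$. A class $\mathcal F$ of functions on graphs can count $S$ at graph level if for all $G_1,G_2$ with $C(S,G_1)\ne C(S,G_2)$ there is $f\in\mathcal F$ with $f(G_1)\ne f(G_2)$. MPNNs. An MPNN is specified by $T$, arbitrary functions $M_t$ (values in some $\mathbb R^{d_t}$), $U_t$, and an arbitrary readout $R_{\text{graph}}$ on finite multisets: $h^{(0)}_i=x_i$, $h^{(t+1)}_i=U_t\big(h^{(t)}_i,\sum_{j\in N(i)}M_t(h^{(t)}_i,h^{(t)}_j,e_{i,j})\big)$, and $h_G=R_{\text{graph}}(\{\!\{h^{(T)}_i:i\in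 V\}\!\})$. The graph-level function computed is $G\mapsto h_G$; the class of MPNNs consists of all such choices. *)

(* Defs.v *)
From HB Require Import structures.
From mathcomp Require Import all_boot all_order all_algebra.
From mathcomp Require Import reals.
From Stdlib Require Import List Permutation.
Set Implicit Arguments. Unset Strict Implicit. Unset Printing Implicit Defensive.
Import GRing.Theory Num.Theory.
Local Open Scope ring_scope.

Record graph (X E : Type) := Graph {
  gV : finType;
  adj : rel gV;
  adj_sym : symmetric adj;
  adj_irr : irreflexive adj;
  feat : gV -> X;
  efeat : gV -> gV -> E;
  efeat_sym : forall u v, efeat u v = efeat v u }.

Definition is_path X E (G : graph X E) (L : nat) (p : {ffun 'I_L.+1 -> gV G}) : bool :=
  injectiveb p && [forall i : 'I_L, adj (p (inord i)) (p (inord i.+1))].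

Definition path_edges X E (G : graph X E) (L : nat) (p : {ffun 'I_L.+1 -> gV G})
  : {set {set gV G}} :=
  [set [set p (inord i); p (inord i.+1)] | i : 'I_L].

Definition count_paths X E (G : graph X E) (L : nat) : nat :=
  #|[set path_edges p | p in [pred p | @is_path X E G L p]]|.

Definition is_cycle X E (G : graph X E) (L : nat) (p : {ffun 'I_L -> gV G}) : bool :=
  injectiveb p && [forall i : 'I_L, adj (p i) (p (ordS i))].

Definition cycle_edges X E (G : graph X E) (L : nat) (p : {ffun 'I_L -> gV G})
  : {set {set gV G}} :=
  [set [set p i; p (ordS i)] | i : 'I_L].

Definition count_cycles X E (G : graph X E) (L : nat) : nat :=
  #|[set cycle_edges p | p in [pred p | @is_cycle X E G L p]]|.

Definition layer_ty (X : Type) (Hs : nat -> Type) (t : nat) : Type :=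
  match t with 0 => X | n.+1 => Hs n end.

Record mpnn (R : realType) (X E : Type) := MPNN {
  nT : nat;
  Hs : nat -> Type;                           (* Hs t = type of h^(t+1) *)
  dim : nat -> nat;
  Msg : forall t, layer_ty X Hs t -> layer_ty X Hs t -> E -> 'rV[R]_(dim t);
  Upd : forall t, layer_ty X Hs t -> 'rV[R]_(dim t) -> layer_ty X Hs t.+1;
  Out : Type;
  (* readout on finite multisets = permutation-invariant function on lists *)
  readout : list (layer_ty X Hs nT) -> Out;
  readout_perm : forall s1 s2, Permutation s1 s2 -> readout s1 = readout s2 }.

Fixpoint hstate (R : realType) X E (N : mpnn R X E) (G : graph X E) (t : nat)
  : gV G -> layer_ty X (Hs N) t :=
  match t as t0 return gV G -> layer_ty X (Hs N) t0 with
  | 0 => fun i => feat i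
  | t'.+1 => fun i =>
      @Upd R X E N t' (@hstate R X E N G t' i)
        (\sum_(j | adj i j) @Msg R X E N t' (@hstate R X E N G t' i) (@hstate R X E N G t' j) (efeat i j))
  end.

Definition mpnn_out (R : realType) X E (N : mpnn R X E) (G : graph X E) : Out N :=
  @readout R X E N (map (@hstate R X E N G (nT N)) (enum (gV G))).

(* Main.v *)
Require Import Defs.
From mathcomp Require Import all_boot all_order all_algebra zify.
From mathcomp Require Import reals.
From Stdlib Require Import List Permutation.
Set Implicit Arguments. Unset Strict Implicit. Unset Printing Implicit Defensive.
Import GRing.Theory Num.Theory.
Lemma ordSE n (v : 'I_n) : nat_of_ord (ordS v) = if v.+1 == n then 0 else v.+1.
Proof.
rewrite /=; have := ltn_ord v; rewrite leq_eqVlt => /orP [/eqP->|h].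
  by rewrite eqxx modnn.
by rewrite modn_small // ifN // neq_ltn h.
Qed.
Lemma ord_predE n (v : 'I_n) : nat_of_ord (ord_pred v) = if v == 0 :> nat then n.-1 else v.-1.
Proof.
rewrite /=; have := ltn_ord v; case: eqP => [->|h] hv; rewrite ?add0n.
  by rewrite modn_small // prednK // ltnW.
have -> : (v + n).-1 = v.-1 + n by lia.
by rewrite modnDr modn_small //; lia.
Qed.
Lemma ordS_neq n (v : 'I_n) : 1 < n -> ordS v != v.
Proof. move=> hn; apply/eqP => /(congr1 (@nat_of_ord n)); rewrite ordSE. have := ltn_ord v. case: eqP. all: lia. Qed.
Lemma ordS_pred_neq n (v : 'I_n) : 2 < n -> ordS v != ord_pred v.
Proof. move=> hn; apply/eqP => /(congr1 (@nat_of_ord n)); rewrite ordSE ord_predE. have := ltn_ord v. case: eqP; case: eqP; lia. Qed.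
Lemma iter_ordS n (v : 'I_n) k : nat_of_ord (iter k (@ordS n) v) = (v + k) %% n.
Proof. elim: k => [|k IH] /=. by rewrite addn0 modn_small. by rewrite IH /= addnS -addn1 modnDml addn1. Qed.

Section MP.
Variables (R : realType) (X E : Type) (x0 : X) (e0 : E).

Fixpoint cst (N : mpnn R X E) (t : nat) : layer_ty X (Hs N) t :=
  match t as t0 return layer_ty X (Hs N) t0 with
  | 0 => x0
  | t'.+1 => @Upd R X E N t' (cst N t') ((@Msg R X E N t' (cst N t') (cst N t') e0) *+ 2)%R
  end.

Lemma hstate_cst (N : mpnn R X E) (G : graph X E)
  (hf : forall v : gV G, feat v = x0) (he : forall u v : gV G, efeat u v = e0)
  (hd : forall v : gV G, #|[pred w | adj v w]| = 2) t v :
  @hstate R X E N G t v = cst N t.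
Proof.
elim: t v => [|t IH] v /=; first exact: hf.
rewrite IH.
have -> : (\sum_(j | adj v j) Msg (cst N t) (@hstate R X E N G t j) (efeat v j))%R
   = (\sum_(j in [pred w | adj v w]) Msg (cst N t) (cst N t) e0)%R.
  by apply: eq_big => [j|j _]; rewrite ?inE // IH he.
by rewrite sumr_const hd.
Qed.

Lemma out_cst (N : mpnn R X E) (G : graph X E)
  (hf : forall v : gV G, feat v = x0) (he : forall u v : gV G, efeat u v = e0)
  (hd : forall v : gV G, #|[pred w | adj v w]| = 2) :
  mpnn_out N G = readout (nseq #|gV G| (cst N (nT N))).
Proof.
rewrite /mpnn_out cardE; congr readout.
elim: (enum (gV G)) => //= a s ->; by rewrite hstate_cst.
Qed.
End MP.
Definition cadj n : rel 'I_n := fun u v => (u != v) && ((v == ordS u) || (u == ordS v)).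
Lemma cadj_sym n : symmetric (@cadj n).
Proof. by move=> u v; rewrite /cadj eq_sym orbC. Qed.
Lemma cadj_irr n : irreflexive (@cadj n).
Proof. by move=> u; rewrite /cadj eqxx. Qed.

Lemma ord_pred_neq n (v : 'I_n) : 1 < n -> ord_pred v != v.
Proof.
move=> hn; apply/eqP => h; have := ordS_neq v hn.
by rewrite -{1}h ord_predK eqxx.
Qed.

Lemma cadj_nbr n (v w : 'I_n) : 2 < n -> cadj v w = (w == ordS v) || (w == ord_pred v).
Proof.
move=> hn; rewrite /cadj.
have -> : (v == ordS w) = (w == ord_pred v) by rewrite eq_sym (canF_eq (@ordSK n)).
case: (eqVneq w (ordS v)) => [->|_] /=.
  by rewrite eq_sym ordS_neq //; lia.
case: (eqVneq w (ord_pred v)) => [->|_] /=; last by rewrite andbF.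
by rewrite eq_sym ord_pred_neq //; lia.
Qed.

Lemma cadj_deg n (v : 'I_n) : 2 < n -> #|[pred w | cadj v w]| = 2.
Proof.
move=> hn; have := cards2 (ordS v) (ord_pred v); rewrite ordS_pred_neq // => <-.
by apply: eq_card => w; rewrite !inE cadj_nbr.
Qed.

Definition dadj n : rel (bool * 'I_n) := fun x y => (x.1 == y.1) && cadj x.2 y.2.
Lemma dadj_sym n : symmetric (@dadj n).
Proof. by move=> x y; rewrite /dadj eq_sym cadj_sym. Qed.
Lemma dadj_irr n : irreflexive (@dadj n).
Proof. by move=> x; rewrite /dadj cadj_irr andbF. Qed.

Lemma dadj_deg n (x : bool * 'I_n) : 2 < n -> #|[pred y | dadj x y]| = 2.
Proof.
move=> hn; have := cards2 (x.1, ordS x.2) (x.1, ord_pred x.2).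
rewrite xpair_eqE eqxx ordS_pred_neq // => <-.
apply: eq_card => -[b w]; rewrite !inE /dadj cadj_nbr // !xpair_eqE /=.
by rewrite (eq_sym b) -andb_orr.
Qed.

Definition cycG (X E : Type) (x0 : X) (e0 : E) n : graph X E :=
  @Graph X E 'I_n (@cadj n) (@cadj_sym n) (@cadj_irr n) (fun _ => x0) (fun _ _ => e0) (fun _ _ => erefl).
Definition dblG (X E : Type) (x0 : X) (e0 : E) n : graph X E :=
  @Graph X E (bool * 'I_n)%type (@dadj n) (@dadj_sym n) (@dadj_irr n) (fun _ => x0) (fun _ _ => e0) (fun _ _ => erefl).

Lemma imset_pos (T U : finType) (f : T -> U) (P : pred T) x : P x -> #|[set f y | y in P]| <> 0.
Proof. move=> Px /eqP; rewrite cards_eq0 => /eqP h. have : f x \in f @: P by apply: imset_f. by rewrite h inE. Qed.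
Lemma imset_zero (T U : finType) (f : T -> U) (P : pred T) : (forall x, ~~ P x) -> #|[set f y | y in P]| = 0.
Proof. move=> h; apply/eqP; rewrite cards_eq0; apply/eqP/setP => u; rewrite inE; apply/imsetP => -[x Px _]. by move: (h x) Px => /negP. Qed.

Section Counts.
Variables (X E : Type) (x0 : X) (e0 : E) (L : nat) (hL : 2 < L).

Lemma path_C : count_paths (cycG x0 e0 (2 * L)) L <> 0.
Proof.
have hw : L.+1 <= 2 * L by lia.
apply: (@imset_pos _ _ _ _ [ffun i : 'I_L.+1 => (widen_ord hw i : 'I_(2 * L))]).
rewrite inE /is_path; apply/andP; split.
  apply/injectiveP => i j; rewrite !ffunE => /(congr1 (@nat_of_ord _)) /= h; exact: ord_inj.
apply/forallP => i; rewrite !ffunE /= /cadj; apply/andP; split.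
  apply/eqP => /(congr1 (@nat_of_ord _)) /=; rewrite !inordK; have := ltn_ord i; lia.
apply/orP; left; apply/eqP; apply: ord_inj; rewrite ordSE /= !inordK; have := ltn_ord i; try lia.
case: eqP; lia.
Qed.

Lemma cycle_D : count_cycles (dblG x0 e0 L) L <> 0.
Proof.
apply: (@imset_pos _ _ _ _ [ffun i : 'I_L => (false, i)]).
rewrite inE /is_cycle; apply/andP; split.
  by apply/injectiveP => i j; rewrite !ffunE => -[].
apply/forallP => i; rewrite !ffunE /= /dadj /= /cadj eqxx /=.
rewrite eq_sym ordS_neq /=; last lia.
by []. Qed.

Lemma path_D : count_paths (dblG x0 e0 L) L = 0.
Proof.
apply: imset_zero => p; apply/negP; rewrite /is_path => /andP [/injectiveP inj /forallP ha].
have h1 : forall m (hm : m < L.+1), (p (inord m)).1 = (p ord0).1.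
  elim=> [|m IH] hm.
    by congr (p _).1; apply: ord_inj; rewrite inordK.
  have hm' : m < L by [].
  have := ha (Ordinal hm'); rewrite /= /dadj => /andP [/eqP <- _].
  by apply: IH; apply: ltnW.
have inj2 : injective (fun k => (p k).2).
  move=> i j h; apply: inj; rewrite [p i]surjective_pairing [p j]surjective_pairing /= h; congr pair.
  by rewrite -(inord_val i) -(inord_val j) h1 // h1.
have := leq_card _ inj2; rewrite !card_ord; lia.
Qed.

Lemma cycle_C : count_cycles (cycG x0 e0 (2 * L)) L = 0.
Proof.
have hn : 2 < 2 * L by lia.
apply: imset_zero => p; apply/negP; rewrite /is_cycle => /andP [/injectiveP inj /forallP ha].
set S := [set p i | i in 'I_L].
have cS : #|S| = L by rewrite card_imset // card_ord.
have clS : forall v, v \in S -> ordS v \in S.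
  move=> v /imsetP [i _ ->].
  have ha' : cadj (p i) (p (ordS i)) := ha i.
  have hb : cadj (p i) (p (ord_pred i)).
    by rewrite cadj_sym; have := ha (ord_pred i); rewrite ord_predK.
  have neq : p (ordS i) != p (ord_pred i).
    by apply/eqP => /inj /eqP; apply/negP; apply: ordS_pred_neq; lia.
  move: ha' hb neq; rewrite !cadj_nbr //.
  case/orP => [/eqP <- _ _|/eqP ->]; first exact: imset_f.
  case/orP => [/eqP <- _|/eqP -> ]; first exact: imset_f.
  by rewrite eqxx.
have h0 : 0 < L by lia.
set v0 := p (Ordinal h0).
have hit : forall k, iter k (@ordS _) v0 \in S.
  elim=> [|k IH] /=; first exact: imset_f.
  exact: clS.
have ST : S = setT.
  apply/setP => w; rewrite inE.
  have -> : w = iter (w + 2 * L - v0) (@ordS _) v0.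
    apply: ord_inj; rewrite iter_ordS.
    have -> : v0 + (w + 2 * L - v0) = w + 2 * L by have := ltn_ord v0; lia.
    by rewrite modnDr modn_small.
  exact: hit.
move: cS; rewrite ST cardsT card_ord; lia.
Qed.
End Counts.

Unset Implicit Arguments.
Theorem theorem7 (R : realType) (X E : Type) (x0 : X) (e0 : E) (L : nat) :
  3 <= L ->
  exists G1 G2 : graph X E,
    count_paths G1 L <> count_paths G2 L /\
    count_cycles G1 L <> count_cycles G2 L /\
    forall N : mpnn R X E, mpnn_out N G1 = mpnn_out N G2.
Proof.
move=> hL; exists (cycG x0 e0 (2 * L)), (dblG x0 e0 L); split; last split.
- rewrite path_D //; exact: path_C.
- rewrite cycle_C //; apply: nesym; exact: cycle_D.
- move=> N.
  rewrite (@out_cst R X E x0 e0 N (cycG x0 e0 (2 * L))) //; last first.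
    by move=> v; apply: cadj_deg; lia.
  rewrite (@out_cst R X E x0 e0 N (dblG x0 e0 L)) //; last first.
    by move=> v; apply: dadj_deg; lia.
  rewrite /= card_prod card_bool !card_ord. reflexivity. Qed.
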